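(* Let $\mu>0$ and $\lambda_1>0$, and consider the system $$\frac{dx}{dt}=\lambda_1\bigl(2\mu y-4\mu xy-2x^2-2xy+x\bigr),\qquad \frac{dy}{dt}=\lambda_1\bigl(\mu y-4\mu y^2-2xy-2y^2+y\bigr).$$ Let $Q\subset\mathbb{R}^2$ be the closed quadrangle defined by $y\ge x/2$, $y\ge 1/2-x$, $y\le 1/3$, $y\le 1/2-x/2$, and let $(x_c,y_c)=\left(\frac{\mu+1}{2\mu+3},\frac{\mu+1}{4\mu+6}\right)$. Then $(x_c,y_c)$ is asymptotically stable in $Q$: for every initial condition $(x_0,y_0)\in Q$, the solution satisfies $\lim_{t\to\infty}(x(t),y(t))=(x_c,y_c)$.
   Context: $Q$ is the domain of convex mosaics in the inverse symbolic plane, with vertices $(1/3,1/6)$, $(1/2,1/4)$, $(1/3,1/3)$, $(1/6,1/3)$. *)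

(* Defs.v *)
From Stdlib Require Import Reals.
From Coquelicot Require Import Coquelicot.
Open Scope R_scope.

Definition inQ (x y : R) : Prop :=
  x / 2 <= y /\ 1/2 - x <= y /\ y <= 1/3 /\ y <= 1/2 - x / 2.

Definition fx (mu lam1 x y : R) : R :=
  lam1 * (2*mu*y - 4*mu*x*y - 2*x^2 - 2*x*y + x).
Definition fy (mu lam1 x y : R) : R :=
  lam1 * (mu*y - 4*mu*y^2 - 2*x*y - 2*y^2 + y).

Definition xc (mu : R) : R := (mu + 1) / (2*mu + 3).
Definition yc (mu : R) : R := (mu + 1) / (4*mu + 6).

(* Main.v *)
Require Import Defs.
From Stdlib Require Import Reals Lra Psatz.
From Coquelicot Require Import Coquelicot.
Open Scope R_scope.

Lemma alg_ineq (mu lam M x y Z V: R): 0<mu -> 0<lam -> 0<=M -> Rabs x <= M -> Rabs y <= M ->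
 2*(y*Z-1)*(fy mu lam x y * Z + y*(-(lam*(mu+1))*Z + lam*((4*mu+6)+2*V)))
 + 2*((x-2*y)*Z - V)*((fx mu lam x y - 2*fy mu lam x y)*Z + (x-2*y)*(-(lam*(mu+1))*Z + lam*((4*mu+6)+2*V)) - (-(lam*mu)*V))
 <= 2*lam*(M*(4*(4*mu+6)+7))*((y*Z-1)^2+((x-2*y)*Z - V)^2).
Proof.
  intros Hmu Hl HM Hx Hy.
  match goal with |- ?L <= _ => assert (E: L = 2*lam*(-y*(4*mu+6)*(y*Z-1)^2 - 2*y*(y*Z-1)*((x-2*y)*Z - V) - mu*((x-2*y)*Z - V)^2 - (x-2*y)*(4*mu+6)*(y*Z-1)*((x-2*y)*Z - V) - 2*(x-2*y)*((x-2*y)*Z - V)^2)) by (unfold fx, fy; ring) end.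
  rewrite E.
  set (K := 4*mu+6). set (u := x - 2*y). set (P := y*Z-1). set (Q := u*Z - V).
  apply Rabs_le_between in Hx. apply Rabs_le_between in Hy.
  assert (Hu: -(3*M) <= u <= 3*M) by (unfold u; lra).
  assert (HK: 0 < K) by (unfold K; lra).
  assert (h1: 0 <= (M+y)*K*P^2) by (apply Rmult_le_pos; [apply Rmult_le_pos; lra| apply pow2_ge_0]).
  assert (h2: 0 <= (M-y)*(P-Q)^2 + (M+y)*(P+Q)^2) by (apply Rplus_le_le_0_compat; apply Rmult_le_pos; first [apply pow2_ge_0 | lra]).
  assert (h3: 0 <= K*((3*M-u)*(P-Q)^2 + (3*M+u)*(P+Q)^2)) by (apply Rmult_le_pos; [lra|apply Rplus_le_le_0_compat; apply Rmult_le_pos; first [apply pow2_ge_0 | lra]]).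
  assert (h4: 0 <= (3*M+u)*Q^2) by (apply Rmult_le_pos; first [apply pow2_ge_0 | lra]).
  assert (h5: 0 <= mu*Q^2) by (apply Rmult_le_pos; first [apply pow2_ge_0 | lra]).
  assert (h6: 0 <= M*K*Q^2) by (apply Rmult_le_pos; [apply Rmult_le_pos|]; first [apply pow2_ge_0 | lra]).
  assert (h7: 0 <= M*P^2) by (apply Rmult_le_pos; first [apply pow2_ge_0 | lra]).
  assert (h8: 0 <= M*K*P^2) by (apply Rmult_le_pos; [apply Rmult_le_pos|]; first [apply pow2_ge_0 | lra]).
  rewrite (Rmult_assoc (2*lam)).
  apply Rmult_le_compat_l; [lra|].
  nra.
Qed.

Lemma RL_plus {T} (F : (T -> Prop) -> Prop) {FF : Filter F} (f g : T -> R) a b :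
  filterlim f F (locally a) -> filterlim g F (locally b) ->
  filterlim (fun s => f s + g s) F (locally (a + b)).
Proof. intros Hf Hg. eapply filterlim_comp_2; [exact Hf|exact Hg|]. apply (filterlim_plus a b). Qed.

Lemma RL_mult {T} (F : (T -> Prop) -> Prop) {FF : Filter F} (f g : T -> R) a b :
  filterlim f F (locally a) -> filterlim g F (locally b) ->
  filterlim (fun s => f s * g s) F (locally (a * b)).
Proof. intros Hf Hg. eapply filterlim_comp_2; [exact Hf|exact Hg|]. apply (filterlim_mult a b). Qed.

Lemma RL_eq {T} (F : (T -> Prop) -> Prop) (f : T -> R) (a b : R) :
  filterlim f F (locally a) -> a = b -> filterlim f F (locally b).
Proof. intros H <-; exact H. Qed.

Lemma RL_opp {T} (F : (T -> Prop) -> Prop) {FF : Filter F} (f : T -> R) a :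
  filterlim f F (locally a) -> filterlim (fun s => - f s) F (locally (- a)).
Proof.
  intros Hf.
  assert (H := RL_mult F (fun _ => -1) f (-1) a (filterlim_const _) Hf).
  replace (-a) with (-1*a) by ring.
  eapply filterlim_ext; [|exact H]. intros; simpl; ring.
Qed.

Lemma RL_cont (f : R -> R) : continuous f 0 -> filterlim f (at_right 0) (locally (f 0)).
Proof.
  intros Hc. eapply filterlim_comp with (g := f) (f := fun t => t); [|exact Hc].
  intros P [e He]. exists e. intros y Hy _. apply He, Hy.
Qed.

Lemma right_eps (f : R -> R) a (e : posreal) : filterlim f (at_right 0) (locally a) ->
  exists d, 0 < d /\ forall s, 0 < s < d -> Rabs (f s - a) < e.
Proof.
  intros H. apply filterlim_locally with (eps := e) in H.
  destruct H as [d Hd]. exists d. split; [apply cond_pos|].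
  intros s Hs. apply (Hd s); [|lra].
  change (Rabs (s - 0) < d). rewrite Rminus_0_r, Rabs_pos_eq; lra.
Qed.

Lemma RL_der (f : R -> R) (a : R) : is_derive f 0 a -> filterlim f (at_right 0) (locally (f 0)).
Proof. intros H. apply RL_cont. apply (ex_derive_continuous (K:=R_AbsRing) (V:=R_NormedModule) f 0). exists a. exact H. Qed.

Lemma cont_of_der (f : R -> R) t : ex_derive f t -> continuity_pt f t.
Proof. intros H. apply continuity_pt_filterlim. apply (ex_derive_continuous f t H). Qed.

Lemma local_bound (f : R -> R) T : 0 < T -> (forall t, 0 < t -> ex_derive f t) ->
  filterlim f (at_right 0) (locally (f 0)) ->
  exists M, 0 <= M /\ forall t, 0 < t <= T -> Rabs (f t) <= M.
Proof.
  intros HT Hd Hl.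
  destruct (right_eps f (f 0) (mkposreal 1 Rlt_0_1) Hl) as [d [Hd0 Hd1]]. simpl in Hd1.
  set (a := Rmin (d/2) T).
  assert (Ha : 0 < a <= T). { unfold a. split; [apply Rmin_glb_lt; lra| apply Rmin_r]. }
  assert (Hc : forall c, a <= c <= T -> continuity_pt f c).
  { intros c Hc. apply cont_of_der, Hd. lra. }
  destruct (continuity_ab_maj f a T (proj2 Ha) Hc) as [Mx [HMx _]].
  destruct (continuity_ab_min f a T (proj2 Ha) Hc) as [mn [Hmn _]].
  exists (Rmax (Rabs (f 0) + 1) (Rmax (Rabs (f Mx)) (Rabs (f mn)))).
  split. { eapply Rle_trans; [|apply Rmax_l]. pose proof (Rabs_pos (f 0)); lra. }
  intros t Ht.
  destruct (Rlt_le_dec t d) as [Htd|Htd].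
  - eapply Rle_trans; [|apply Rmax_l].
    specialize (Hd1 t (conj (proj1 Ht) Htd)).
    pose proof (Rabs_triang_inv (f t) (f 0)). lra.
  - assert (Hta : a <= t <= T). { split; [|lra]. unfold a. eapply Rle_trans; [apply Rmin_l|lra]. }
    specialize (HMx t Hta). specialize (Hmn t Hta).
    eapply Rle_trans; [|apply Rmax_r].
    apply Rabs_le_between. split.
    + eapply Rle_trans; [|exact Hmn].
      pose proof (Rle_abs (- f mn)) as H0. rewrite Rabs_Ropp in H0.
      pose proof (Rmax_r (Rabs (f Mx)) (Rabs (f mn))). lra.
    + eapply Rle_trans; [exact HMx|].
      pose proof (Rle_abs (f Mx)). pose proof (Rmax_l (Rabs (f Mx)) (Rabs (f mn))). lra.
Qed.

Lemma gronwall0 (G dG : R -> R) T :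
  (forall t, 0 < t -> is_derive G t (dG t)) ->
  (forall t, 0 < t <= T -> dG t <= 0) ->
  filterlim G (at_right 0) (locally 0) ->
  forall t, 0 < t <= T -> G t <= 0.
Proof.
  intros Hd Hneg Hl t Ht.
  destruct (Rle_lt_dec (G t) 0) as [|Hpos]; [assumption|exfalso].
  destruct (right_eps G 0 (mkposreal _ Hpos) Hl) as [d [Hd0 Hd1]]. simpl in Hd1.
  set (s := Rmin d t / 2).
  assert (Hs : 0 < s < d /\ s < t).
  { unfold s. pose proof (Rmin_l d t). pose proof (Rmin_r d t).
    assert (0 < Rmin d t) by (apply Rmin_glb_lt; lra). lra. }
  specialize (Hd1 s (conj (proj1 (proj1 Hs)) (proj2 (proj1 Hs)))).
  rewrite Rminus_0_r in Hd1. apply Rabs_lt_between in Hd1.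
  destruct (MVT_gen G s t dG) as [c [Hc Heq]].
  - intros y Hy. apply Hd. rewrite Rmin_left in Hy by lra. lra.
  - intros y Hy. apply cont_of_der. eexists. apply Hd. rewrite Rmin_left in Hy by lra. lra.
  - rewrite Rmin_left in Hc by lra. rewrite Rmax_right in Hc by lra.
    assert (dG c <= 0) by (apply Hneg; lra).
    assert (dG c * (t - s) <= 0).
    { apply Rmult_le_0_r; lra. }
    lra.
Qed.

Lemma D_mult (f g : R -> R) t a b : is_derive f t a -> is_derive g t b ->
  is_derive (fun s => f s * g s) t (a * g t + f t * b).
Proof. intros Hf Hg. exact (is_derive_mult f g t a b Hf Hg Rmult_comm). Qed.
Lemma D_plus (f g : R -> R) t a b : is_derive f t a -> is_derive g t b ->
  is_derive (fun s => f s + g s) t (a + b).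
Proof. intros Hf Hg. exact (is_derive_plus f g t a b Hf Hg). Qed.
Lemma D_minus (f g : R -> R) t a b : is_derive f t a -> is_derive g t b ->
  is_derive (fun s => f s - g s) t (a - b).
Proof. intros Hf Hg. exact (is_derive_minus f g t a b Hf Hg). Qed.
Lemma D_const (k t : R) : is_derive (fun _ => k) t 0.
Proof. exact (is_derive_const (K:=R_AbsRing) k t). Qed.
Lemma D_eq (f : R -> R) (t a b : R) : is_derive f t a -> a = b -> is_derive f t b.
Proof. intros H ->; exact H. Qed.

Definition Vf lam mu c t := c * exp (-(lam*mu)*t).
Definition Zf lam mu A c D t := A + 2*c*exp(-(lam*mu)*t) + D*exp(-(lam*(mu+1))*t).

Lemma Vf_der lam mu c t : is_derive (Vf lam mu c) t (-(lam*mu) * Vf lam mu c t).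
Proof. unfold Vf. auto_derive; [auto| ring]. Qed.

Lemma Zf_der lam mu A c D t : is_derive (Zf lam mu A c D) t
  (-(lam*(mu+1)) * Zf lam mu A c D t + lam*(A*(mu+1) + 2*Vf lam mu c t)).
Proof. unfold Zf, Vf. auto_derive; [auto| ring]. Qed.

Lemma exp_der C t : is_derive (fun s => exp (-C*s)) t (-C * exp(-C*t)).
Proof. auto_derive; [auto| ring]. Qed.
Lemma lim_expm a : 0 < a -> is_lim (fun t => exp (-a*t)) p_infty 0.
Proof.
  intros Ha.
  apply (is_lim_comp exp (fun t => -a*t) p_infty 0 m_infty).
  - exact is_lim_exp_m.
  - pose proof (is_lim_scal_l (fun t => t) (-a) p_infty p_infty (is_lim_id _)) as H.
    simpl in H. destruct (Rle_dec 0 (-a)); [lra|]. exact H.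
  - exists 0. intros; discriminate.
Qed.
Lemma is_lim_eq (f : R -> R) x (a b : R) : is_lim f x a -> a = b -> is_lim f x b.
Proof. intros H <-; exact H. Qed.

Theorem lemma6 (mu lam1 : R) (x y : R -> R) :
  0 < mu -> 0 < lam1 ->
  (* (x,y) is a forward solution on [0, +oo): differentiable for t > 0 with
     the ODE, and right-continuous at t = 0 *)
  (forall t, 0 < t -> is_derive x t (fx mu lam1 (x t) (y t))) ->
  (forall t, 0 < t -> is_derive y t (fy mu lam1 (x t) (y t))) ->
  filterlim x (at_right 0) (locally (x 0)) ->
  filterlim y (at_right 0) (locally (y 0)) ->
  inQ (x 0) (y 0) ->
  is_lim x p_infty (xc mu) /\ is_lim y p_infty (yc mu).
Proof.
  intros Hmu Hl Hx Hy Hx0 Hy0 HQ.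
  assert (Hy0pos: 0 < y 0) by (unfold inQ in HQ; lra).
  set (A := (4*mu+6)/(mu+1)). set (c := (x 0 - 2*y 0)/ y 0). set (D := 1/y 0 - A - 2*c).
  set (Z := Zf lam1 mu A c D). set (V := Vf lam1 mu c).
  assert (HA: A*(mu+1) = 4*mu+6) by (unfold A; field; lra).
  set (Z' := fun s => -(lam1*(mu+1)) * Z s + lam1*((4*mu+6) + 2*V s)).
  assert (HZd : forall s, is_derive Z s (Z' s)).
  { intros s. unfold Z'. rewrite <- HA. apply Zf_der. }
  set (P := fun s => y s * Z s - 1).
  set (Q := fun s => (x s - 2*y s)*Z s - V s).
  set (dP := fun s => fy mu lam1 (x s) (y s) * Z s + y s * Z' s).
  set (dQ := fun s => (fx mu lam1 (x s) (y s) - 2*fy mu lam1 (x s) (y s))*Z s + (x s - 2*y s)*Z' s - (-(lam1*mu)*V s)).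
  assert (HPd : forall s, 0 < s -> is_derive P s (dP s)).
  { intros s Hs. unfold P, dP. eapply D_eq.
    - apply (D_minus (fun s => y s * Z s) (fun _ => 1)); [|apply D_const].
      apply (D_mult y Z); [apply Hy, Hs| apply HZd].
    - ring. }
  assert (HQd : forall s, 0 < s -> is_derive Q s (dQ s)).
  { intros s Hs. unfold Q, dQ. eapply D_eq.
    - apply (D_minus (fun s => (x s - 2*y s) * Z s) V); [|apply Vf_der].
      apply (D_mult (fun s => x s - 2*y s) Z); [|apply HZd].
      apply (D_minus x (fun s => 2 * y s)); [apply Hx, Hs|].
      apply (D_mult (fun _ => 2) y); [apply D_const| apply Hy, Hs].
    - unfold V; ring. }
  set (E := fun s => P s * P s + Q s * Q s).
  set (dE := fun s => 2 * P s * dP s + 2 * Q s * dQ s).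
  assert (HEd : forall s, 0 < s -> is_derive E s (dE s)).
  { intros s Hs. unfold E, dE. eapply D_eq.
    - apply (D_plus (fun s => P s * P s) (fun s => Q s * Q s)).
      + apply (D_mult P P); apply HPd, Hs.
      + apply (D_mult Q Q); apply HQd, Hs.
    - ring. }
  assert (HZc : filterlim Z (at_right 0) (locally (Z 0))).
  { eapply RL_der. apply HZd. }
  assert (HVc : filterlim V (at_right 0) (locally (V 0))).
  { eapply RL_der. apply Vf_der. }
  assert (HZ0 : Z 0 = 1 / y 0).
  { unfold Z, Zf. rewrite !Rmult_0_r, exp_0. unfold D. field. lra. }
  assert (HV0 : V 0 = c).
  { unfold V, Vf. rewrite !Rmult_0_r, exp_0. ring. }
  assert (HP0 : filterlim P (at_right 0) (locally 0)).
  { apply (RL_eq _ _ (y 0 * Z 0 + Ropp 1)).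
    - apply (RL_plus _ (fun s => y s * Z s) (fun _ => Ropp 1)).
      + apply (RL_mult _ y Z); assumption.
      + apply filterlim_const.
    - rewrite HZ0. field. lra. }
  assert (HQ0 : filterlim Q (at_right 0) (locally 0)).
  { apply (RL_eq _ _ ((x 0 + - (2 * y 0)) * Z 0 + - V 0)).
    - apply (RL_plus _ (fun s => (x s - 2 * y s) * Z s) (fun s => - V s)).
      + apply (RL_mult _ (fun s => x s - 2 * y s) Z); [|assumption].
        apply (RL_plus _ x (fun s => - (2 * y s))); [assumption|].
        apply (RL_opp _ (fun s => 2 * y s)). apply (RL_mult _ (fun _ => 2) y); [apply filterlim_const|assumption].
      + apply (RL_opp _ V); assumption.
    - rewrite HZ0, HV0. unfold c. field. lra. }
  assert (HE0 : filterlim E (at_right 0) (locally 0)).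
  { apply (RL_eq _ _ (0 * 0 + 0 * 0)); [|ring].
    apply (RL_plus _ (fun s => P s * P s) (fun s => Q s * Q s)); [apply (RL_mult _ P P)|apply (RL_mult _ Q Q)]; assumption. }
  assert (HEz : forall t, 0 < t -> E t = 0).
  { intros t Ht.
    destruct (local_bound x t Ht (fun s hs => ex_intro _ _ (Hx s hs)) Hx0) as [Mx [HMx HMx']].
    destruct (local_bound y t Ht (fun s hs => ex_intro _ _ (Hy s hs)) Hy0) as [My [HMy HMy']].
    set (M := Rmax Mx My).
    assert (HM0 : 0 <= M) by (unfold M; eapply Rle_trans; [exact HMx|apply Rmax_l]).
    set (C := 2*lam1*(M*(4*(4*mu+6)+7))).
    assert (HG : forall s, 0 < s <= t -> E s * exp (-C*s) <= 0).
    { apply (gronwall0 (fun s => E s * exp (-C*s)) (fun s => (dE s - C * E s) * exp (-C*s))).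
      - intros s Hs. eapply D_eq.
        + apply (D_mult E (fun s => exp (-C*s))); [apply HEd, Hs| apply exp_der].
        + ring.
      - intros s Hs. apply Rmult_le_0_r; [|left; apply exp_pos].
        assert (Hal := alg_ineq mu lam1 M (x s) (y s) (Z s) (V s) Hmu Hl HM0
          (Rle_trans _ _ _ (HMx' s Hs) (Rmax_l _ _)) (Rle_trans _ _ _ (HMy' s Hs) (Rmax_r _ _))).
        assert (dE s <= C * E s).
        { eapply Rle_trans; [apply Req_le| eapply Rle_trans; [exact Hal| apply Req_le]].
          - unfold dE, P, Q, dP, dQ, Z'. ring.
          - unfold C, E, P, Q. ring. }
        lra.
      - apply (RL_eq _ _ (0 * exp (-C*0))); [|ring].
        apply (RL_mult _ E (fun s => exp (-C*s))); [assumption|].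
        eapply (RL_der (fun s => exp (-C*s))). apply exp_der. }
    specialize (HG t (conj Ht (Rle_refl t))).
    assert (Hep := exp_pos (-C*t)).
    assert (HEt : 0 <= E t) by (unfold E; nra).
    assert (E t <= 0) by nra.
    lra. }
  assert (HPQ : forall t, 0 < t -> y t * Z t = 1 /\ (x t - 2 * y t) * Z t = V t).
  { intros t Ht. specialize (HEz t Ht). unfold E, P, Q in HEz.
    assert (H1 : (y t * Z t - 1) * (y t * Z t - 1) = 0)
      by (pose proof (Rle_0_sqr (y t * Z t - 1)); pose proof (Rle_0_sqr ((x t - 2 * y t) * Z t - V t)); unfold Rsqr in *; lra).
    assert (H2 : ((x t - 2 * y t) * Z t - V t) * ((x t - 2 * y t) * Z t - V t) = 0)
      by (pose proof (Rle_0_sqr (y t * Z t - 1)); pose proof (Rle_0_sqr ((x t - 2 * y t) * Z t - V t)); unfold Rsqr in *; lra).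
    apply Rmult_integral in H1. apply Rmult_integral in H2. split.
    - destruct H1; lra.
    - destruct H2; lra. }
  assert (Hlam_mu : 0 < lam1 * mu) by (apply Rmult_lt_0_compat; lra).
  assert (Hlam_mu1 : 0 < lam1 * (mu + 1)) by (apply Rmult_lt_0_compat; lra).
  assert (HVl : is_lim V p_infty 0).
  { unfold V, Vf. apply (is_lim_eq _ _ (c * 0)); [|ring].
    apply (is_lim_scal_l (fun t => exp (-(lam1*mu)*t)) c p_infty 0). apply lim_expm; assumption. }
  assert (HApos : 0 < A) by (unfold A; apply Rdiv_lt_0_compat; lra).
  assert (HZl : is_lim Z p_infty A).
  { unfold Z, Zf. apply (is_lim_eq _ _ (A + 2 * c * 0 + D * 0)); [|ring].
    apply (is_lim_plus' (fun t => A + 2 * c * exp (-(lam1*mu)*t)) (fun t => D * exp (-(lam1*(mu+1))*t))).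
    - apply (is_lim_plus' (fun _ => A) (fun t => 2 * c * exp (-(lam1*mu)*t))).
      + apply is_lim_const.
      + apply (is_lim_scal_l (fun t => exp (-(lam1*mu)*t)) (2 * c) p_infty 0). apply lim_expm; assumption.
    - apply (is_lim_scal_l (fun t => exp (-(lam1*(mu+1))*t)) D p_infty 0). apply lim_expm; assumption. }
  assert (HZi : is_lim (fun t => / Z t) p_infty (/ A)).
  { apply (is_lim_inv Z p_infty A HZl). intro H. injection H. lra. }
  split.
  - apply (is_lim_ext_loc (fun t => (V t + 2) * / Z t)).
    + exists 0. intros t Ht. destruct (HPQ t Ht) as [H1 H2].
      assert (Z t <> 0) by (intro H0; rewrite H0 in H1; lra).
      field_simplify_eq; [|assumption]. lra.
    + apply (is_lim_eq _ _ ((0 + 2) * / A)).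
      * apply (is_lim_mult (fun t => V t + 2) (fun t => / Z t) p_infty (0 + 2) (/ A)).
        -- apply (is_lim_plus' V (fun _ => 2)); [assumption| apply is_lim_const].
        -- exact HZi.
        -- simpl; trivial.
      * unfold xc, A. field. lra.
  - apply (is_lim_ext_loc (fun t => / Z t)).
    + exists 0. intros t Ht. destruct (HPQ t Ht) as [H1 H2].
      assert (Z t <> 0) by (intro H0; rewrite H0 in H1; lra).
      field_simplify_eq; [|assumption]. lra.
    + apply (is_lim_eq _ _ (/ A)); [exact HZi|].
      unfold yc, A. field. lra.
Qed.
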